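(* Let $T$ be a necklace and $a\preccurlyeq b$ vertices of $T$. Then the object $\iota^T_{a,b}:T_{[a,b]}\hookrightarrow T_{a,b}$ is terminal in the category $\mathcal{N}ec/T_{a,b}$.
   Context: Cubical sets: presheaves on the category $\square$ with objects $[1]^n$ and morphisms generated by faces $\partial_{i,\epsilon}$ (insert $\epsilon$ at coordinate $i$), degeneracies (delete a coordinate) and negative connections ($\gamma_{i,0}$ replaces $(x_i,x_{i+1})$ by $\max(x_i,x_{i+1})$); $\square^n$ is representable, with vertices the subsets of $\{1,\dots,n\}$, $\alpha=\emptyset$, $\omega=\{1,\dots,n\}$. For $a\subseteq b$ in $\square^n$, $d(a,b)=|b\setminus a|$ and $\iota^n_{a,b}:\square^{d(a,b)}\hookrightarrow\square^n$ is the (composite of faces) map with $\iota^n_{a,b}(\alpha)=a$, $\iota^n_{a,b}(\omega)=b$, which inserts the coordinates of $a$ and $\{1,\dots,n\}\setminus b$ as constants and the free coordinates in the positions of $b\setminus a$ in increasing order. Necklaces: for double-pointed cubical sets $X_{a,b},Y_{u,v}$, $X\vee Y$ is the pushout identifying $b$ with $u$, pointed by $(a,v)$; for maps $f:S_{a,b}\to X_{u,v}$, $g:S'_{a',b'}\to X_{v,w}$, $f*g:S\vee S'\to X$ is the induced map. A necklace is $T=\square^{n_1}\vee\dots\vee\square^{n_k}$ ($n_i\ge1$) pointed by $\alpha$ of the first and $\omega$ of the last cube, with beads $B_i:\square^{n_i}\to T$. Its vertex set is ordered by $\preccurlyeq$: $x\preccurlyeq y$ iff they lie in a common bead with $x\subseteq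 y$ or $x$ lies in an earlier bead than $y$. $\mathcal{N}ec$ is the full subcategory of double-pointed cubical sets on necklaces. For a cubical set $S$ and vertices $a,b$, $\mathcal{N}ec/S_{a,b}$ has objects maps $f:U\to S$ with $U$ a necklace sending its endpoints to $a,b$, and morphisms the maps $g$ in $\mathcal{N}ec$ with $f'g=f$. Subnecklace: for vertices $a\preccurlyeq b$ of $T$: if $a,b$ lie in the bead $\square^{n_i}$, $T_{[a,b]}=\square^{d(a,b)}$ and $\iota^T_{a,b}=B_i\circ\iota^{n_i}_{a,b}$; if $a\in\square^{n_i}$, $b\in\square^{n_j}$ with $i<j$, $T_{[a,b]}=\square^{d(a,\omega)}\vee\square^{n_{i+1}}\vee\dots\vee\square^{n_{j-1}}\vee\square^{d(\alpha,b)}$ and $\iota^T_{a,b}=(B_i\circ\iota^{n_i}_{a,\omega})*B_{i+1}*\dots*B_{j-1}*(B_j\circ\iota^{n_j}_{\alpha,b})$. *)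

(* Defs.v *)
From HB Require Import structures.
From mathcomp Require Import all_boot.

Set Implicit Arguments.
Unset Strict Implicit.
Unset Printing Implicit Defensive.

(* The box category: objects [1]^n, vertices of [1]^n are elements of  *)
(* cube n = subsets of {0..n-1} (as boolean functions).                *)

Definition cube n := {ffun 'I_n -> bool}.
Definition cbot n : cube n := [ffun => false].
Definition ctop n : cube n := [ffun => true].
Definition cpt : cube 0 := cbot 0.

Definition face n (i : 'I_n.+1) (e : bool) (x : cube n) : cube n.+1 :=
  [ffun j => if unlift i j is Some k then x k else e].

Definition degen n (i : 'I_n.+1) (x : cube n.+1) : cube n :=
  [ffun k => x (lift i k)].

(* negative connection gamma_{i,0} : [1]^{n+2} -> [1]^{n+1},
   replaces (x_i, x_{i+1}) by max(x_i, x_{i+1}) *)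
Definition conn n (i : 'I_n.+1) (x : cube n.+2) : cube n.+1 :=
  [ffun k => if k == i then x (widen_ord (leqnSn _) i) || x (lift ord0 i)
             else x (lift (lift ord0 i) k)].

Inductive boxhom : forall m n : nat, (cube m -> cube n) -> Prop :=
| bh_id n : @boxhom n n id
| bh_face n (i : 'I_n.+1) (e : bool) : @boxhom n n.+1 (face i e)
| bh_degen n (i : 'I_n.+1) : @boxhom n.+1 n (degen i)
| bh_conn n (i : 'I_n.+1) : @boxhom n.+2 n.+1 (conn i)
| bh_comp l m n (f : cube m -> cube n) (g : cube l -> cube m) :
    @boxhom m n f -> @boxhom l m g -> @boxhom l n (f \o g)
| bh_ext m n (f g : cube m -> cube n) : @boxhom m n f -> f =1 g -> @boxhom m n g.

Record boxmap m n := BoxMap { bfun :> cube m -> cube n; bfunP : @boxhom m n bfun }.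

Definition bcomp l m n (f : boxmap m n) (g : boxmap l m) : boxmap l n :=
  BoxMap (bh_comp (bfunP f) (bfunP g)).

Lemma cube0_eq (x y : cube 0) : x = y.
Proof. by apply/ffunP => -[]. Qed.

Lemma boxhom_to0 m (v : cube 0) : @boxhom m 0 (fun _ => v).
Proof.
elim: m => [|m IH].
  by apply: (bh_ext (bh_id 0)) => x; apply: cube0_eq.
by apply: (bh_ext (bh_comp IH (bh_degen (@ord0 m)))).
Qed.

Lemma face_degen n (v : cube n.+1) : face ord0 (v ord0) (degen ord0 v) = v.
Proof.
apply/ffunP => j; rewrite !ffunE; case: unliftP => [k ->|->] //.
by rewrite ffunE.
Qed.

Lemma boxhom_const m n (v : cube n) : @boxhom m n (fun _ => v).
Proof.
elim: n v => [|n IH] v; first exact: boxhom_to0.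
apply: (bh_ext (bh_comp (bh_face ord0 (v ord0)) (IH (degen ord0 v)))) => x /=.
exact: face_degen.
Qed.

Definition bconst m n (v : cube n) : boxmap m n := BoxMap (boxhom_const m v).

(* Necklaces T = [1]^{n_1} v ... v [1]^{n_k}, n_i >= 1 (k = 0 gives    *)
(* the point [1]^0).  The m-cubes of T are pairs (i, f) with           *)
(* f : [1]^m -> [1]^{n_i} a box map, modulo the pushout identification *)
(* (i, const omega) ~ (i+1, const alpha); we use the representatives   *)
(* which are not of the form (i, const omega) with i not last.         *)

Record necklace := Necklace { beads : seq nat; beads_pos : all (leq 1) beads }.

Definition nlist (T : necklace) : seq nat :=
  if beads T is [::] then [:: 0] else beads T.
Definition nk (T : necklace) : nat := (size (nlist T)).-1.+1.
Definition ndimn (T : necklace) (t : nat) : nat := nth 0 (nlist T) t.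
Definition ndim (T : necklace) (i : 'I_(nk T)) : nat := ndimn T i.

Definition ncanon (T : necklace) m (i : 'I_(nk T)) (f : boxmap m (ndim i)) : bool :=
  ~~ ((i.+1 < nk T) && [forall x : cube m, f x == ctop _]).

Definition ncell (T : necklace) (m : nat) : Type :=
  {p : {i : 'I_(nk T) & boxmap m (ndim i)} | ncanon (projT2 p)}.

Lemma not_canon_lt T m (i : 'I_(nk T)) (h : boxmap m (ndim i)) :
  ~~ ncanon h -> i.+1 < nk T.
Proof. by rewrite negbK => /andP []. Qed.

Definition nsucc T m (i : 'I_(nk T)) (h : boxmap m (ndim i)) (H : ~~ ncanon h)
  : 'I_(nk T) := Ordinal (not_canon_lt H).

Lemma ndim_pos T (j : 'I_(nk T)) : 0 < j -> 0 < ndim j.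
Proof.
case: T j => [[|b bs] hb] j /=.
  by case: j => -[].
move=> _; rewrite /ndim /ndimn /=.
have hj : j < size (b :: bs) by exact: ltn_ord j.
have := allP hb _ (mem_nth 0 hj); by [].
Qed.

Lemma canon_succ T m (i : 'I_(nk T)) (h : boxmap m (ndim i)) (H : ~~ ncanon h) :
  ncanon (bconst m (cbot (ndim (nsucc H)))).
Proof.
apply/negP => /andP [_ /forallP /(_ (cbot m)) /eqP E].
have hp : 0 < ndim (nsucc H) by apply: ndim_pos.
have := congr1 (fun f : cube _ => f (Ordinal hp)) E.
by rewrite /= !ffunE.
Qed.

Definition nnorm T m (i : 'I_(nk T)) (h : boxmap m (ndim i)) : ncell T m :=
  match boolP (ncanon h) with
  | AltTrue H => exist _ (existT _ i h) H
  | AltFalse H => exist _ (existT _ (nsucc H) (bconst m (cbot _))) (canon_succ H)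
  end.

Definition nact T m n (g : boxmap m n) (c : ncell T n) : ncell T m :=
  nnorm (bcomp (projT2 (sval c)) g).

Definition nbead T (i : 'I_(nk T)) m (h : boxmap m (ndim i)) : ncell T m := nnorm h.

Definition nvert T (i : 'I_(nk T)) (v : cube (ndim i)) : ncell T 0 :=
  nbead (bconst 0 v).

Definition nalpha T : ncell T 0 := @nvert T (@ord0 (size (nlist T)).-1) (cbot _).
Definition nomega T : ncell T 0 := @nvert T (@ord_max (size (nlist T)).-1) (ctop _).

Definition nfun (U T : necklace) := forall m, ncell U m -> ncell T m.
Definition natural U T (F : nfun U T) : Prop :=
  forall m n (g : boxmap m n) (c : ncell U n), F m (nact g c) = nact g (F n c).
Definition nfun_eq U T (F G : nfun U T) : Prop := forall m c, F m c = G m c.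
Definition ncompose U S T (F : nfun S T) (G : nfun U S) : nfun U T :=
  fun m c => F m (G m c).

Definition subv n (v w : cube n) : bool := [forall p, v p ==> w p].

Definition nprec T (x y : ncell T 0) : Prop :=
  (exists (i : 'I_(nk T)) (v w : cube (ndim i)),
      x = @nvert T i v /\ y = @nvert T i w /\ subv v w)
  \/ (exists (i j : 'I_(nk T)) (v : cube (ndim i)) (w : cube (ndim j)),
      i < j /\ x = @nvert T i v /\ y = @nvert T j w).

Definition nec_over U T (x y : ncell T 0) (F : nfun U T) : Prop :=
  natural F /\ F 0 (nalpha U) = x /\ F 0 (nomega U) = y.

Definition nec_hom U S (G : nfun U S) : Prop :=
  natural G /\ G 0 (nalpha U) = nalpha S /\ G 0 (nomega U) = nomega S.

Definition terminal_in_Nec_over T (x y : ncell T 0) S (F : nfun S T) : Prop :=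
  nec_over x y F /\
  forall U (G : nfun U T), nec_over x y G ->
    exists H : nfun U S,
      [/\ nec_hom H, nfun_eq (ncompose F H) G &
          forall H' : nfun U S, nec_hom H' -> nfun_eq (ncompose F H') G ->
            nfun_eq H' H].

(* The maps iota^n_{v,w} : [1]^{d(v,w)} -> [1]^n, v,w given as subsets *)
(* (boolean predicates on coordinate indices).                         *)
Definition vpred n (v : cube n) : nat -> bool :=
  fun p => if (insub p : option 'I_n) is Some q then v q else false.

Definition dvw n (v w : nat -> bool) : nat := count (fun p => w p && ~~ v p) (iota 0 n).

(* coordinates of v are constants 1, those outside w constants 0, the   *)
(* free coordinates (in w \ v) are filled by x in increasing order      *)
Definition ins n (v w : nat -> bool) e (x : cube e) : cube n :=
  [ffun p : 'I_n => if v p then true else if ~~ w p then false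
     else if (insub (count (fun q => w q && ~~ v q) (iota 0 p)) : option 'I_e)
          is Some q then x q else false].

(* Subnecklace T_{[a,b]}.  A bead of it is described by a triple       *)
(* (t, v, w): it is [1]^{d(v,w)} mapped into bead t of T by iota_{v,w}.*)
(* The vertex a (resp. b) is taken in its representative bead.         *)
(* Beads of dimension 0 are dropped ([1]^0 v X = X).                   *)
Definition trip := (nat * (nat -> bool) * (nat -> bool))%type.

Definition vbead T (x : ncell T 0) : nat := projT1 (sval x).
Definition vcoord T (x : ncell T 0) : nat -> bool := vpred (projT2 (sval x) cpt).

Definition sub_trips T (a b : ncell T 0) : seq trip :=
  let i := vbead a in let j := vbead b in
  if i == j then [:: (i, vcoord a, vcoord b)]
  else (i, vcoord a, fun _ => true)
         :: [seq (t, fun _ => false, fun _ => true) | t <- iota i.+1 (j - i.+1)]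
         ++ [:: (j, fun _ => false, vcoord b)].

Definition tdim T (tr : trip) : nat := dvw (ndimn T tr.1.1) tr.1.2 tr.2.

Definition subtr T (a b : ncell T 0) : seq trip :=
  [seq tr <- sub_trips a b | 0 < tdim T tr].

Lemma subnk_pos T (a b : ncell T 0) : all (leq 1) (map (tdim T) (subtr a b)).
Proof.
rewrite all_map; exact: filter_all.
Qed.

Definition subnk T (a b : ncell T 0) : necklace := Necklace (subnk_pos a b).

(* the triple describing bead k of T_{[a,b]} (default: the point a) *)
Definition ktrip T (a b : ncell T 0) (k : nat) : trip :=
  nth (vbead a : nat, vcoord a, vcoord a) (subtr a b) k.

Definition ktgt T (a b : ncell T 0) (k : 'I_(nk (subnk a b))) : 'I_(nk T) :=
  inord (ktrip a b k).1.1.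

Definition is_sub_iota T (a b : ncell T 0)
  (hs : forall k : 'I_(nk (subnk a b)), boxmap (ndim k) (ndim (ktgt k))) : Prop :=
  forall k x, hs k x = ins (ndim (ktgt k)) (ktrip a b k).1.2 (ktrip a b k).2 x.

Definition nstar S T (F : forall k : 'I_(nk S), forall m, boxmap m (ndim k) -> ncell T m)
  : nfun S T := fun m c => F (projT1 (sval c)) m (projT2 (sval c)).

(* iota^T_{a,b} = (B_i o iota_{a,omega}) * B_{i+1} * ... * (B_j o iota_{alpha,b}) *)
Definition sub_iota T (a b : ncell T 0)
  (hs : forall k : 'I_(nk (subnk a b)), boxmap (ndim k) (ndim (ktgt k)))
  : nfun (subnk a b) T :=
  nstar (fun k m g => nbead (bcomp (hs k) g)).

(* Main.v *)
Require Import Defs.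
From mathcomp Require Import all_boot.
From mathcomp Require Import zify.
From Stdlib Require Import FunctionalExtensionality ProofIrrelevance IndefiniteDescription.
Set Implicit Arguments. Unset Strict Implicit. Unset Printing Implicit Defensive.

Lemma boxmap_eq m n (f g : boxmap m n) : f =1 g -> f = g.
Proof.
case: f g => f Hf [g Hg] /= E.
have E' : f = g by apply: functional_extensionality.
subst g; by rewrite (proof_irrelevance _ Hf Hg).
Qed.

Lemma vpredE n (u : cube n) (q : 'I_n) : vpred u q = u q.
Proof. by rewrite /vpred valK. Qed.

Lemma vpred_ge n (u : cube n) p : n <= p -> vpred u p = false.
Proof. by move=> h; rewrite /vpred insubN // -leqNgt. Qed.

Lemma vpred_inj n (u u' : cube n) : vpred u =1 vpred u' -> u = u'.
Proof. by move=> E; apply/ffunP => q; rewrite -!vpredE E. Qed.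

Definition nb T m (c : ncell T m) : nat := projT1 (sval c).
Definition nf T m (c : ncell T m) (x : cube m) (p : nat) : bool :=
  vpred (projT2 (sval c) x) p.

Lemma cell_ext T m (c c' : ncell T m) :
  nb c = nb c' -> (forall x p, nf c x p = nf c' x p) -> c = c'.
Proof.
case: c c' => [[i h] H] [[i' h'] H']; rewrite /nb /nf /=.
move=> /val_inj E; subst i' => E.
have Eh : h = h' by apply: boxmap_eq => x; apply: vpred_inj => p; apply: E.
subst h'; by rewrite (bool_irrelevance H H').
Qed.

Lemma nnorm_canon T m (i : 'I_(nk T)) (h : boxmap m (ndim i)) (H : ncanon h) :
  nnorm h = exist _ (existT _ i h) H.
Proof.
rewrite /nnorm; destruct (boolP (ncanon h)) as [H'|H']; last by exfalso; move/negP: H'.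
by rewrite (bool_irrelevance H' H).
Qed.

Lemma nnorm_succ T m (i : 'I_(nk T)) (h : boxmap m (ndim i)) (H : ~~ ncanon h) :
  nnorm h = exist _ (existT _ (nsucc H) (bconst m (cbot _))) (canon_succ H).
Proof.
rewrite /nnorm; destruct (boolP (ncanon h)) as [H'|H']; first by exfalso; move/negP: H.
have -> : H' = H by apply: bool_irrelevance.
by [].
Qed.

Lemma nb_nnorm T m (i : 'I_(nk T)) (h : boxmap m (ndim i)) :
  nb (nnorm h) = if ncanon h then i : nat else i.+1.
Proof.
case: (boolP (ncanon h)) => H.
  by rewrite (nnorm_canon H).
by rewrite (nnorm_succ H).
Qed.

Lemma nf_nnorm T m (i : 'I_(nk T)) (h : boxmap m (ndim i)) x p :
  nf (nnorm h) x p = ncanon h && vpred (h x) p.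
Proof.
case: (boolP (ncanon h)) => H.
  by rewrite (nnorm_canon H).
rewrite (nnorm_succ H) /nf /= /vpred; case: insub => // q; by rewrite ffunE.
Qed.

Lemma noncanonE T m (i : 'I_(nk T)) (h : boxmap m (ndim i)) :
  ~~ ncanon h = (i.+1 < nk T) && [forall x, h x == ctop _].
Proof. by rewrite /ncanon negbK. Qed.

Lemma cbot_ntop n : 0 < n -> cbot n != ctop n.
Proof.
move=> hn; apply/eqP => /ffunP /(_ (Ordinal hn)); by rewrite !ffunE.
Qed.

Lemma ncanon_ex T m (i : 'I_(nk T)) (h : boxmap m (ndim i)) x :
  h x != ctop _ -> ncanon h.
Proof.
move=> hx; rewrite /ncanon negb_and; apply/orP; right.
by apply/negP => /forallP /(_ x) /eqP E; rewrite E eqxx in hx.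
Qed.

Lemma nact_nnorm T l m (i : 'I_(nk T)) (h : boxmap m (ndim i)) (g : boxmap l m) :
  nact g (nnorm h) = nnorm (bcomp h g).
Proof.
case: (boolP (ncanon h)) => H.
  by rewrite (nnorm_canon H).
rewrite (nnorm_succ H); rewrite /nact /=.
have hc : ncanon (bcomp (bconst m (cbot (ndim (nsucc H)))) g).
  apply: (@ncanon_ex _ _ _ _ (cbot l)) => /=.
  by apply: cbot_ntop; apply: ndim_pos.
have hc' : ~~ ncanon (bcomp h g).
  move: (H); rewrite !noncanonE => /andP [-> /forallP Hx] /=.
  by apply/forallP => x; apply: Hx.
apply: cell_ext => [|x p]; rewrite ?nb_nnorm ?nf_nnorm hc (negbTE hc') //.
by rewrite /= /vpred; case: insub => // q; rewrite ffunE.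
Qed.

Lemma cell0_vert T (y : ncell T 0) :
  y = @nvert _ (projT1 (sval y)) (projT2 (sval y) cpt).
Proof.
case: y => [[i h] H] /=.
have E : bconst 0 (h cpt) = h by apply: boxmap_eq => x /=; rewrite (cube0_eq x cpt).
by rewrite /nvert /nbead E (nnorm_canon H).
Qed.

Lemma ncanon_const0 T (i : 'I_(nk T)) (u : cube (ndim i)) :
  ncanon (bconst 0 u) = ~~ ((i.+1 < nk T) && (u == ctop _)).
Proof.
rewrite /ncanon; congr (~~ (_ && _)); apply/forallP/idP => [/(_ cpt) // | H x //].
Qed.

Definition cle T (y z : ncell T 0) : Prop :=
  nb y < nb z \/ (nb y = nb z /\ forall p, nf y cpt p -> nf z cpt p).

Lemma cle_refl T (y : ncell T 0) : cle y y.
Proof. by right. Qed.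

Lemma cle_trans T (x y z : ncell T 0) : cle x y -> cle y z -> cle x z.
Proof.
move=> [h1|[e1 h1]] [h2|[e2 h2]].
- by left; apply: ltn_trans h2.
- by left; rewrite -e2.
- by left; rewrite e1.
- by right; split; [rewrite e1 | move=> p /h1 /h2].
Qed.

Definition subc n (u u' : cube n) : Prop := forall p, vpred u p -> vpred u' p.

Lemma subcP n (u u' : cube n) : subc u u' <-> (forall q : 'I_n, u q -> u' q).
Proof.
split => [H q|H p]; first by rewrite -!vpredE; apply: H.
by rewrite /vpred; case: insubP => // q _ _; apply: H.
Qed.

Lemma subc_top n (u u' : cube n) : subc u u' -> u == ctop n -> u' == ctop n.
Proof.
move=> /subcP H /eqP E; apply/eqP/ffunP => q; rewrite ffunE; apply: H.
by rewrite E ffunE.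
Qed.

Lemma nvert_nb T (i : 'I_(nk T)) (u : cube (ndim i)) :
  nb (@nvert _ i u) = if (i.+1 < nk T) && (u == ctop _) then i.+1 else i.
Proof. by rewrite /nvert /nbead nb_nnorm ncanon_const0 if_neg. Qed.

Lemma nvert_nf T (i : 'I_(nk T)) (u : cube (ndim i)) p :
  nf (@nvert _ i u) cpt p = ~~ ((i.+1 < nk T) && (u == ctop _)) && vpred u p.
Proof. by rewrite /nvert /nbead nf_nnorm ncanon_const0. Qed.

Lemma cle_vert T (i : 'I_(nk T)) (u u' : cube (ndim i)) :
  subc u u' -> cle (@nvert _ i u) (@nvert _ i u').
Proof.
move=> H; rewrite /cle !nvert_nb.
case E': ((i.+1 < nk T) && (u' == ctop _)).
  case E: ((i.+1 < nk T) && (u == ctop _)); first by right; split => // p; rewrite !nvert_nf E.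
  by left.
case E: ((i.+1 < nk T) && (u == ctop _)).
  move/andP: E => [h1 h2]; by rewrite h1 (subc_top H h2) in E'.
by right; split => // p; rewrite !nvert_nf E E' /=; apply: H.
Qed.

Lemma nprec_cle T (x y : ncell T 0) : nprec x y -> cle x y.
Proof.
case => [[i [v [w [-> [-> H]]]]]|[i [j [v [w [hij [-> ->]]]]]]].
  apply: cle_vert; apply/subcP => q; move/forallP: H => /(_ q); by move/implyP.
rewrite /cle !nvert_nb.
case E: ((i.+1 < nk T) && (v == ctop _)); case E': ((j.+1 < nk T) && (w == ctop _)).
- by left; rewrite ltnS.
- move: hij; rewrite leq_eqVlt => /orP [/eqP hij|hij]; last by left.
  by right; split => // p; rewrite nvert_nf E.
- by left; apply: ltn_trans hij _.
- by left.
Qed.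

Lemma boxhom_mono m n (f : cube m -> cube n) : boxhom f ->
  forall u u', subc u u' -> subc (f u) (f u').
Proof.
elim => {m n f} //.
- move=> n i e u u' /subcP H; apply/subcP => j; rewrite !ffunE.
  by case: unlift => // k; apply: H.
- move=> n i u u' /subcP H; apply/subcP => j; rewrite !ffunE; apply: H.
- move=> n i u u' /subcP H; apply/subcP => j; rewrite !ffunE.
  case: ifP => _; last by apply: H.
  by case/orP => /H ->; rewrite ?orbT.
- by move=> l m n f g _ Hf _ Hg u u' /Hg /Hf.
- by move=> m n f g _ Hf E u u'; rewrite -!E; apply: Hf.
Qed.

Lemma nact_vert T m (c : ncell T m) (x : cube m) :
  nact (bconst 0 x) c = @nvert _ (projT1 (sval c)) (projT2 (sval c) x).
Proof.
case: c => [[t f] H] /=; rewrite /nact /nvert /nbead /=.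
by congr nnorm; apply: boxmap_eq.
Qed.

Lemma nvert_nb_ge T (i : 'I_(nk T)) (u : cube (ndim i)) : i <= nb (@nvert _ i u).
Proof. by rewrite nvert_nb; case: ifP. Qed.

Lemma canon_wit T m (t : 'I_(nk T)) (f : boxmap m (ndim t)) :
  ncanon f -> exists x, nb (@nvert _ t (f x)) = t.
Proof.
rewrite /ncanon negb_and => /orP [H|/forallPn [x Hx]].
  by exists (cbot m); rewrite nvert_nb (negbTE H).
by exists x; rewrite nvert_nb (negbTE Hx) andbF.
Qed.

Lemma cell_vert_ext T m (c c' : ncell T m) :
  (forall x : cube m, nact (bconst 0 x) c = nact (bconst 0 x) c') -> c = c'.
Proof.
move=> E.
have E' : forall x, @nvert _ (projT1 (sval c)) (projT2 (sval c) x)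
                  = @nvert _ (projT1 (sval c')) (projT2 (sval c') x).
  by move=> x; rewrite -!nact_vert.
move: E'; clear E.
case: c c' => [[t f] H] [[t' f'] H'] /= E.
have Ett : t = t' :> nat.
  have [x0 h0] := canon_wit H; have [x1 h1] := canon_wit H'.
  apply/eqP; rewrite eqn_leq; apply/andP; split.
    by rewrite -h1 -(E x1) nvert_nb_ge.
  by rewrite -h0 (E x0) nvert_nb_ge.
have Et : t = t' by apply: val_inj.
subst t'.
apply: cell_ext => [//|x p]; rewrite /nf /=.
have Eb := congr1 (@nb _ _) (E x); have Ef := congr1 (fun c => nf c cpt p) (E x).
move: Eb Ef; rewrite !nvert_nb !nvert_nf.
case A: ((t.+1 < nk T) && (f x == ctop _)); case B: ((t.+1 < nk T) && (f' x == ctop _)) => //=.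
- by move/andP: A => [_ /eqP ->]; move/andP: B => [_ /eqP ->].
- by move=> /eqP; rewrite eqn_leq ltnn.
- by move=> /eqP; rewrite eqn_leq ltnn andbF.
Qed.

Lemma nnorm_ext T m (i i' : 'I_(nk T)) (h : boxmap m (ndim i)) (h' : boxmap m (ndim i')) :
  nat_of_ord i = nat_of_ord i' -> (forall x p, vpred (h x) p = vpred (h' x) p) -> nnorm h = nnorm h'.
Proof.
move=> /val_inj E; subst i' => E.
have -> : h = h' by apply: boxmap_eq => x; apply: vpred_inj => p; apply: E.
by [].
Qed.

Lemma vert_id T (y : ncell T 0) (i : 'I_(nk T)) (u : cube (ndim i)) :
  nat_of_ord i = vbead y -> vpred u =1 vcoord y -> @nvert _ i u = y.
Proof.
move=> E1 E2; rewrite [RHS]cell0_vert.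
rewrite /nvert /nbead; apply: (@nnorm_ext _ _ i (projT1 (sval y))) => // x p /=; exact: E2.
Qed.

Lemma nact_comp T l m n (g : boxmap l m) (g' : boxmap m n) (c : ncell T n) :
  nact g (nact g' c) = nact (bcomp g' g) c.
Proof.
have -> : nact g' c = nnorm (bcomp (projT2 (sval c)) g') by [].
rewrite nact_nnorm /nact; congr nnorm; exact: boxmap_eq.
Qed.

Lemma nact_vert0 T (y : ncell T 0) : nact (bconst 0 cpt) y = y.
Proof.
rewrite nact_vert [RHS]cell0_vert; by [].
Qed.

Lemma ncanon_const T m (i : 'I_(nk T)) (h : boxmap m (ndim i)) c :
  (forall x, h x = c) -> ncanon h = ~~ ((i.+1 < nk T) && (c == ctop _)).
Proof.
move=> E; rewrite /ncanon; congr (~~ (_ && _)).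
apply/forallP/idP => [/(_ (cbot m))|H x]; by rewrite E.
Qed.

Lemma nvert_inj T (t : 'I_(nk T)) (z1 z2 : cube (ndim t)) :
  @nvert _ t z1 = @nvert _ t z2 -> z1 = z2.
Proof.
move=> E.
have Eb := congr1 (@nb _ _) E; rewrite !nvert_nb in Eb.
case A1: ((t.+1 < nk T) && (z1 == ctop _)); case A2: ((t.+1 < nk T) && (z2 == ctop _));
  rewrite A1 A2 in Eb.
- by move/andP: A1 => [_ /eqP ->]; move/andP: A2 => [_ /eqP ->].
- by move/eqP: Eb; rewrite eqn_leq ltnn.
- by move/eqP: Eb; rewrite eqn_leq ltnn andbF.
apply: vpred_inj => p.
have := congr1 (fun c => nf c cpt p) E; by rewrite /= !nvert_nf A1 A2.
Qed.

Lemma count_iotaS (P : pred nat) a : count P (iota 0 a.+1) = count P (iota 0 a) + P a.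
Proof. by rewrite -addn1 iotaD count_cat /= addn0. Qed.

Lemma count_bump (P : pred nat) q k : ~~ P q ->
  count P (iota 0 (bump q k)) = count (fun r => P (bump q r)) (iota 0 k).
Proof.
move=> Pq; elim: k => [|k IH].
  rewrite /bump; case: q Pq => [|q] Pq //=; by rewrite (negbTE Pq).
rewrite count_iotaS -IH.
have [h|h] := leqP q k.
  have -> : bump q k.+1 = (bump q k).+1 by rewrite /bump h (leq_trans h (leqnSn k)).
  by rewrite count_iotaS.
rewrite /bump (leqNgt q k) h /=.
case: (ltngtP q k.+1) => h2.
- by lia.
- by rewrite /= !add0n -count_iotaS.
- have -> : (true + k.+1) = k.+2 by [].
  have Pk : P k.+1 = false by rewrite -h2 (negbTE Pq).
  by rewrite !count_iotaS Pk addn0 add0n.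
Qed.

Lemma ins_allfree n (v w : nat -> bool) e :
  e = dvw n v w -> (forall q : 'I_n, ~~ v q && w q) ->
  boxhom (@ins n v w e) /\ exists proj : cube n -> cube e, boxhom proj /\
    (forall x, proj (ins n v w x) = x) /\
    (forall y : cube n, (forall q : 'I_n, (v q -> y q) /\ (y q -> w q)) -> ins n v w (proj y) = y).
Proof.
move=> He Hf.
have Hc : forall p, p <= n -> count (fun q => w q && ~~ v q) (iota 0 p) = p.
  elim => [//|p IH] hp; rewrite count_iotaS IH ?(ltnW hp) //.
  by have /= := Hf (Ordinal hp); rewrite andbC => ->; rewrite addn1.
have En : e = n by rewrite He /dvw Hc.
clear He; subst e.
have Hid : forall x : cube n, ins n v w x = x.
  move=> x; apply/ffunP => q; rewrite ffunE.
  have := Hf q => /andP [/negbTE -> ->] /=.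
  by rewrite Hc ?(ltnW (ltn_ord q)) // valK.
split; first exact: (bh_ext (bh_id n) (fun x => esym (Hid x))).
exists id; split; first exact: bh_id.
by split => [x|y _]; rewrite Hid.
Qed.

Definition ins_spec n (v w : nat -> bool) e :=
  boxhom (@ins n v w e) /\ exists proj : cube n -> cube e, boxhom proj /\
    (forall x, proj (ins n v w x) = x) /\
    (forall y : cube n, (forall q : 'I_n, (v q -> y q) /\ (y q -> w q)) -> ins n v w (proj y) = y).

Lemma degen_face n (q : 'I_n.+1) c (y : cube n) : degen q (face q c y) = y.
Proof. by apply/ffunP => k; rewrite !ffunE liftK. Qed.

Lemma face_degen' n (q : 'I_n.+1) (y : cube n.+1) : face q (y q) (degen q y) = y.
Proof.
apply/ffunP => j; rewrite !ffunE; case: unliftP => [k ->|->] //; by rewrite ffunE.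
Qed.

Lemma ins_face n (q : 'I_n.+1) (v w : nat -> bool) e (x : cube e) :
  v q || ~~ w q ->
  ins n.+1 v w x = face q (v q) (ins n (fun r => v (bump q r)) (fun r => w (bump q r)) x).
Proof.
move=> Hq; apply/ffunP => j; rewrite !ffunE.
case: unliftP => [k ->|->].
  rewrite ffunE /= count_bump //.
  by rewrite negb_and negbK orbC.
by case: (v q) Hq => //= /negbTE ->.
Qed.

Lemma ins_main n : forall (v w : nat -> bool) e, e = dvw n v w -> ins_spec n v w e.
Proof.
elim: n => [|n IH] v w e He.
  by apply: ins_allfree => // -[].
case: (boolP [exists q : 'I_n.+1, v q || ~~ w q]) => [/existsP [q Hq]|Hn]; last first.
  apply: ins_allfree => // q; move/existsPn: Hn => /(_ q); by rewrite negb_or negbK.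
set v' := fun r => v (bump q r); set w' := fun r => w (bump q r).
have He' : e = dvw n v' w'.
  have Hq' : ~~ (w q && ~~ v q) by rewrite negb_and negbK orbC.
  have E := @count_bump (fun r => w r && ~~ v r) q n Hq'.
  have B : bump q n = n.+1 by rewrite /bump -ltnS ltn_ord.
  by rewrite B in E; rewrite He /dvw E.
have [Hb [p [Hp [Hpi Hip]]]] := IH v' w' e He'.
split.
  by apply: (bh_ext (bh_comp (bh_face q (v q)) Hb)) => x /=; rewrite (ins_face _ Hq).
exists (p \o degen q); split; first exact: bh_comp Hp (bh_degen q).
split => [x|y Hy] /=.
  by rewrite (ins_face _ Hq) degen_face Hpi.
rewrite (ins_face _ Hq) Hip; last first.
  by move=> r; rewrite ffunE; exact: Hy (lift q r).
have -> : v q = y q.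
  case: (Hy q); case: (v q) Hq => /= [_ -> //|/negbTE Hw _ Hyw].
  by case: (y q) Hyw => // /(_ isT); rewrite Hw.
exact: face_degen'.
Qed.

Lemma vpred_ctop n p : vpred (ctop n) p = (p < n).
Proof. rewrite /vpred; case: insubP => [q -> _|/negbTE -> //]; by rewrite ffunE. Qed.

Lemma vpred_cbot n p : vpred (cbot n) p = false.
Proof. rewrite /vpred; case: insubP => [q _ _|//]; by rewrite ffunE. Qed.

Lemma vpred_ins n (v w : nat -> bool) e (x : cube e) p :
  vpred (ins n v w x) p =
  (p < n) && (v p || w p && vpred x (count (fun q => w q && ~~ v q) (iota 0 p))).
Proof.
case: (ltnP p n) => hp; last by rewrite vpred_ge.
rewrite -[p]/(nat_of_ord (Ordinal hp)) vpredE ffunE /=.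
by case: (v p) => //; case: (w p).
Qed.

Lemma cnt_lt n (v w : nat -> bool) p : p < n -> w p && ~~ v p ->
  count (fun q => w q && ~~ v q) (iota 0 p) < dvw n v w.
Proof.
move=> hp hf; rewrite /dvw -(subnKC (ltnW hp)) iotaD count_cat add0n.
rewrite -[X in X < _]addn0 ltn_add2l.
case E: (n - p) => [|d]; first by move: hp; rewrite -subn_gt0 E.
by rewrite /= hf.
Qed.

Lemma vpred_ins_top n (v w : nat -> bool) e p : e = dvw n v w ->
  vpred (ins n v w (ctop e)) p = (p < n) && (v p || w p).
Proof.
move=> He; rewrite vpred_ins vpred_ctop He; case: (ltnP p n) => //= hp.
case Ev: (v p) => //=; case Ew: (w p) => //=.
by rewrite cnt_lt // Ew Ev.
Qed.

Lemma vpred_ins_bot n (v w : nat -> bool) e p :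
  vpred (ins n v w (cbot e)) p = (p < n) && v p.
Proof. by rewrite vpred_ins vpred_cbot andbF orbF. Qed.

Lemma ntop_vpred n (u : cube n) p : p < n -> vpred u p = false -> u != ctop n.
Proof. by move=> hp hu; apply/eqP => E; rewrite E vpred_ctop hp in hu. Qed.

Lemma top_vpred n (u : cube n) : (forall p, p < n -> vpred u p) -> u = ctop n.
Proof. move=> H; apply: vpred_inj => p; rewrite vpred_ctop; case: ltnP => hp; [exact: H | exact: vpred_ge]. Qed.

Lemma ndimn_pos T t : 0 < t -> t < nk T -> 0 < ndimn T t.
Proof. move=> h0 h1; exact: (@ndim_pos T (Ordinal h1) h0). Qed.

Section Sub.
Variables (T : necklace) (a b : ncell T 0).

Definition trip_at k : trip :=
  (vbead a + k, if k == 0 then vcoord a else (fun _ => false),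
   if vbead a + k == vbead b then vcoord b else (fun _ => true)).

Definition Lc := vbead b - vbead a + (0 < tdim T (trip_at (vbead b - vbead a))).

Lemma vbead_lt (x : ncell T 0) : vbead x < nk T.
Proof. exact: ltn_ord. Qed.

Lemma first_pos : vbead a < vbead b -> 0 < dvw (ndimn T (vbead a)) (vcoord a) (fun _ => true).
Proof.
move=> hab.
have hl : (vbead a).+1 < nk T by apply: leq_trans (vbead_lt b).
case: a hab hl => [[i f] H] hab; rewrite /vbead /vcoord /= => hl.
move: (H); rewrite /ncanon /= hl /= => /forallPn [x Hx].
rewrite (cube0_eq x cpt) in Hx.
have [q Hq] : exists q : 'I_(ndim i), ~~ f cpt q.
  apply/existsP; apply: contraR Hx => /existsPn H0; apply/eqP/ffunP => q.
  by rewrite ffunE; move: (H0 q); rewrite negbK.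
rewrite /dvw -has_count; apply/hasP; exists (val q); first by rewrite mem_iota /=.
by rewrite /vcoord /= vpredE.
Qed.

Lemma mid_pos t : 0 < t -> t < nk T -> 0 < dvw (ndimn T t) (fun _ => false) (fun _ => true).
Proof. by move=> h0 h1; rewrite /dvw count_predT size_iota; apply: ndimn_pos. Qed.

Lemma subtr_eq : cle a b -> subtr a b = map trip_at (iota 0 Lc).
Proof.
move=> Hab; rewrite /subtr /sub_trips /Lc.
case: eqP => [eij|nij].
  have -> : trip_at (vbead b - vbead a) = (vbead a, vcoord a, vcoord b).
    by rewrite /trip_at eij subnn addn0 !eqxx.
  rewrite eij subnn add0n /=.
  case: (0 < _) => //=; by rewrite /trip_at addn0 eij !eqxx.
have hab : vbead a < vbead b.
  case: Hab => // -[E _]; by exfalso; apply: nij.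
have -> : trip_at (vbead b - vbead a) = (vbead b, fun _ => false, vcoord b).
  rewrite /trip_at subnKC ?(ltnW hab) // eqxx.
  by have -> : (vbead b - vbead a == 0) = false by apply/negbTE; rewrite subn_eq0 -ltnNge.
have -> : vbead b - vbead a = 1 + (vbead b - (vbead a).+1) + 0 by lia.
rewrite -addnA iotaD map_cat -cat_cons filter_cat.
congr (_ ++ _); last first.
  rewrite !add0n.
  have E : trip_at (1 + (vbead b - (vbead a).+1)) = (vbead b, fun _ => false, vcoord b).
    rewrite /trip_at.
    have -> : vbead a + (1 + (vbead b - (vbead a).+1)) = vbead b by lia.
    by rewrite eqxx.
  rewrite /=; case: (0 < tdim T (vbead b, (fun _ => false), vcoord b)) => /=; by rewrite ?E.
rewrite iotaD /= add0n.
have Hf : trip_at 0 = (vbead a, vcoord a, fun _ => true).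
  rewrite /trip_at addn0 eqxx /=.
  by have -> : (vbead a == vbead b) = false by apply/negbTE/eqP.
rewrite Hf.
have -> : [seq trip_at i | i <- iota 1 (vbead b - (vbead a).+1)]
        = [seq (t, fun _ : nat => false, fun _ : nat => true) | t <- iota (vbead a).+1 (vbead b - (vbead a).+1)].
  apply: (@eq_from_nth _ (0, xpred0, xpred0)) => [|k]; rewrite !size_map !size_iota // => hk.
  rewrite !(nth_map 0) ?size_iota // !nth_iota //.
  rewrite /trip_at add1n /=.
  have -> : (vbead a + k.+1 == vbead b) = false by apply/negbTE; lia.
  by rewrite addnS.
rewrite (first_pos hab) /=; congr (_ :: _).
apply/all_filterP; rewrite all_map; apply/allP => t; rewrite mem_iota => /andP [h1 h2] /=.
rewrite /tdim /=; apply: mid_pos; first by apply: leq_ltn_trans h1.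
apply: leq_trans (vbead_lt b); lia.
Qed.

End Sub.

Lemma nth_all (A : Type) (P : pred A) (s : seq A) x0 k : all P s -> P x0 -> P (nth x0 s k).
Proof. elim: s k => [|x s IH] [|k] //= /andP [Px Ps] P0 //; exact: IH. Qed.

Section Hs.
Variables (T : necklace) (a b : ncell T 0).

Lemma ndim_sub (k : 'I_(nk (subnk a b))) : ndim k = tdim T (ktrip a b k).
Proof.
have := ltn_ord k; rewrite /ndim /ndimn /nk /nlist /ktrip /=; move: (val k) => kk.
case: (subtr a b) => [|tr s] /=.
  case: kk => // _; rewrite /tdim /dvw /= (eq_count (a2 := pred0)) ?count_pred0 // => p.
  by rewrite /= andbN.
by move=> hk; rewrite -[_ :: _]/(map (tdim T) (tr :: s)) (nth_map (vbead a : nat, vcoord a, vcoord a)) // -(size_map (tdim T)).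
Qed.

Lemma ktrip_lt k : (ktrip a b k).1.1 < nk T.
Proof.
apply: (@nth_all _ (fun tr : trip => tr.1.1 < nk T)); last exact: vbead_lt.
rewrite /subtr all_filter /sub_trips.
have ha := vbead_lt a; have hb := vbead_lt b.
case: eqP => _ /=; first by rewrite ha implybT.
rewrite ha implybT all_cat /= hb implybT !andbT all_map; apply/allP => t; rewrite mem_iota /=.
move=> /andP [h1 h2]; apply/implyP => _; lia.
Qed.

Lemma ktgtE (k : 'I_(nk (subnk a b))) : nat_of_ord (ktgt k) = (ktrip a b k).1.1.
Proof. by rewrite /ktgt inordK // ktrip_lt. Qed.

Lemma hsE (k : 'I_(nk (subnk a b))) : ndim k = dvw (ndim (ktgt k)) (ktrip a b k).1.2 (ktrip a b k).2.
Proof. by rewrite ndim_sub /tdim /ndim ktgtE. Qed.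

Definition hsf (k : 'I_(nk (subnk a b))) : boxmap (ndim k) (ndim (ktgt k)) := BoxMap (proj1 (ins_main (hsE k))).

Lemma hsf_sub : is_sub_iota hsf.
Proof. by []. Qed.

End Hs.

Section GM.
Variables (U T : necklace).
Local Unset Implicit Arguments.
Variable (G : nfun U T).
Local Set Implicit Arguments.
Hypothesis HG : natural G.

Lemma G_bead_mono (s : 'I_(nk U)) (u u' : cube (ndim s)) :
  subc u u' -> cle (G 0 (@nvert U s u)) (G 0 (@nvert U s u')).
Proof.
move=> Hu.
pose c := @nnorm U (ndim s) s (BoxMap (@bh_id (ndim s))).
have Ev : forall z, @nvert U s z = nact (bconst 0 z) c.
  by move=> z; rewrite nact_nnorm /nvert /nbead; congr nnorm; apply: boxmap_eq.
rewrite !Ev !HG !nact_vert; apply: cle_vert.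
exact: (boxhom_mono (bfunP _)).
Qed.

Lemma subc_bot n (u : cube n) : subc (cbot n) u.
Proof. by move=> p; rewrite vpred_cbot. Qed.

Lemma subc_top' n (u : cube n) : subc u (ctop n).
Proof. by move=> p; rewrite vpred_ctop; case: ltnP => // h; rewrite vpred_ge. Qed.

Lemma nvert_next (s s' : 'I_(nk U)) : nat_of_ord s' = s.+1 ->
  @nvert U s (ctop _) = @nvert U s' (cbot _).
Proof.
move=> E.
have hs : s.+1 < nk U by rewrite -E ltn_ord.
have hd : 0 < ndim s' by apply: ndim_pos; rewrite E.
apply: cell_ext => [|x p]; last rewrite (cube0_eq x cpt).
  by rewrite !nvert_nb hs eqxx E (negbTE (cbot_ntop hd)) andbF.
by rewrite !nvert_nf hs eqxx /= vpred_cbot andbF.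
Qed.

Lemma G_lower (a : ncell T 0) : G 0 (nalpha U) = a ->
  forall s u, cle a (G 0 (@nvert U s u)).
Proof.
move=> Ha.
have H0 : forall n (s : 'I_(nk U)), nat_of_ord s = n -> cle a (G 0 (@nvert U s (cbot _))).
  elim => [|n IH] s Es.
    have -> : s = @ord0 (size (nlist U)).-1 by apply: val_inj.
    by rewrite Ha; apply: cle_refl.
  have hn : n < nk U by apply: ltn_trans (ltn_ord s); rewrite Es.
  rewrite -(@nvert_next (Ordinal hn)) //.
  apply: cle_trans (IH (Ordinal hn) erefl) _; apply: G_bead_mono; exact: subc_top'.
move=> s u; apply: cle_trans (H0 _ s erefl) _; apply: G_bead_mono; exact: subc_bot.
Qed.

Lemma G_upper (b : ncell T 0) : G 0 (nomega U) = b ->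
  forall s u, cle (G 0 (@nvert U s u)) b.
Proof.
move=> Hb.
have H0 : forall d (s : 'I_(nk U)), s + d = (nk U).-1 -> cle (G 0 (@nvert U s (ctop _))) b.
  elim => [|d IH] s Es.
    have -> : s = @ord_max (size (nlist U)).-1 by apply: val_inj; move: Es; rewrite addn0 /nk /=.
    by rewrite Hb; apply: cle_refl.
  have hn : s.+1 < nk U by move: (ltn_ord s); rewrite /nk /= in Es *; lia.
  rewrite (@nvert_next s (Ordinal hn)) //.
  apply: cle_trans _ (IH (Ordinal hn) _); last by rewrite /= addSnnS.
  apply: G_bead_mono; exact: subc_top'.
move=> s u; apply: cle_trans _ (H0 ((nk U).-1 - s) s _); last first.
  by move: (ltn_ord s); rewrite /nk; lia.
apply: G_bead_mono; exact: subc_top'.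
Qed.

End GM.

Section Main.
Variables (T : necklace) (a b : ncell T 0).
Hypothesis Hab : cle a b.

Notation S := (subnk a b).
Notation F := (sub_iota (@hsf T a b) : nfun S T).

Lemma Hab2 : vbead a < vbead b \/ (vbead a = vbead b /\ forall p, vcoord a p -> vcoord b p).
Proof. exact: Hab. Qed.

Lemma nkS : nk S = (Lc a b).-1.+1.
Proof.
rewrite /nk /nlist /= (subtr_eq Hab).
by case: (Lc a b) => [|l] //=; rewrite !size_map size_iota.
Qed.

Lemma ktripE k : k < Lc a b -> ktrip a b k = trip_at a b k.
Proof.
move=> hk; rewrite /ktrip (subtr_eq Hab) (nth_map 0) ?size_iota // nth_iota //.
Qed.

Lemma ktrip_ge k : Lc a b <= k -> ktrip a b k = (vbead a : nat, vcoord a, vcoord a).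
Proof.
move=> hk; rewrite /ktrip nth_default // (subtr_eq Hab) size_map size_iota //.
Qed.

Lemma kcases (k : 'I_(nk S)) : k < Lc a b \/ (Lc a b = 0 /\ nat_of_ord k = 0).
Proof.
have := ltn_ord k; move: (nat_of_ord k) => kk; rewrite nkS; case E: (Lc a b) => [|l] /=.
  by rewrite ltnS leqn0 => /eqP ->; right.
by left.
Qed.

Lemma Lc_le : Lc a b <= vbead b - vbead a + 1.
Proof. rewrite /Lc; case: (0 < _) => //; lia. Qed.

Lemma ktgtS (k : 'I_(nk S)) : nat_of_ord (ktgt k) = vbead a + k.
Proof.
rewrite ktgtE; case: (kcases k) => [hk|[hL hk]].
  by rewrite ktripE.
by rewrite ktrip_ge ?hL // hk addn0.
Qed.

Lemma ktrip0v (k : 'I_(nk S)) : nat_of_ord k = 0 -> (ktrip a b k).1.2 = vcoord a.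
Proof.
move=> hk; case: (kcases k) => [hl|[hL _]].
  by rewrite ktripE // /trip_at hk.
by rewrite ktrip_ge // hL.
Qed.

Lemma ktripSv (k : 'I_(nk S)) : 0 < nat_of_ord k -> (ktrip a b k).1.2 = (fun _ => false).
Proof.
move=> hk; case: (kcases k) => [hl|[hL hk0]]; last by rewrite hk0 in hk.
by rewrite ktripE // /trip_at; case: (nat_of_ord k) hk.
Qed.

Lemma ktrip_nl (k : 'I_(nk S)) : k.+1 < nk S -> (ktrip a b k).2 = (fun _ => true).
Proof.
move=> hk0; have hk : k.+1 < (Lc a b).-1.+1 by rewrite -nkS.
have hl : k < Lc a b by lia.
have hL := Lc_le.
rewrite ktripE // /trip_at.
by have -> : (vbead a + k == vbead b) = false by apply/negbTE; lia.
Qed.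


Lemma hsf_top (k : 'I_(nk S)) : k.+1 < nk S -> hsf k (ctop _) = ctop _.
Proof.
move=> hk; apply: top_vpred => p hp; rewrite /= vpred_ins_top ?hsE //.
by rewrite hp ktrip_nl // orbT.
Qed.

Lemma FN m (k : 'I_(nk S)) (g : boxmap m (ndim k)) : F m (nnorm g) = nnorm (bcomp (hsf k) g).
Proof.
case: (boolP (ncanon g)) => H; first by rewrite (nnorm_canon H).
rewrite (nnorm_succ H) /sub_iota /nstar /= /nbead.
have hk1 : k.+1 < nk S := not_canon_lt H.
have ek' : nat_of_ord (nsucc H) = k.+1 by [].
have Hg : forall x, g x = ctop _.
  by move: (H); rewrite noncanonE => /andP [_ /forallP Hx] x; apply/eqP.
have et' : nat_of_ord (ktgt (nsucc H)) = (ktgt k).+1 by rewrite !ktgtS ek' addnS.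
have v0 : forall p, vpred (hsf (nsucc H) (cbot _)) p = false.
  move=> p; have := ktripSv (k := nsucc H) isT; rewrite /= vpred_ins_bot => ->.
  by rewrite andbF.
have c1 : ncanon (bcomp (hsf (nsucc H)) (bconst m (cbot (ndim (nsucc H))))).
  apply: (@ncanon_ex _ _ _ _ (cbot m)) => /=.
  apply: (@ntop_vpred _ _ 0); last exact: v0.
  by apply: ndim_pos; rewrite et'.
have c2 : ncanon (bcomp (hsf k) g) = false.
  rewrite (@ncanon_const _ _ _ _ (ctop _)) ?eqxx ?andbT.
    by rewrite -et' ltn_ord.
  by move=> x; change (hsf k (g x) = ctop _); rewrite Hg hsf_top.
apply: cell_ext => [|x p]; rewrite ?nb_nnorm ?nf_nnorm c1 c2 //.
by rewrite /= v0.
Qed.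


Lemma F_natural : natural F.
Proof.
move=> m n g [[k h] H].
have -> : F n (exist _ (existT _ k h) H) = nnorm (bcomp (hsf k) h) by [].
rewrite nact_nnorm.
have -> : nact g (exist _ (existT _ k h) H) = nnorm (bcomp h g) by [].
rewrite FN; congr nnorm; exact: boxmap_eq.
Qed.

Lemma F_vert (k : 'I_(nk S)) (u : cube (ndim k)) :
  F 0 (@nvert S k u) = @nvert T (ktgt k) (hsf k u).
Proof. rewrite /nvert /nbead FN; congr nnorm; exact: boxmap_eq. Qed.

Lemma vcoord_lt (y : ncell T 0) p : vcoord y p -> p < ndimn T (vbead y).
Proof. by rewrite /vcoord; case: ltnP => // h; rewrite vpred_ge. Qed.

Lemma dvw0 n (v w : nat -> bool) p : dvw n v w = 0 -> p < n -> w p -> v p.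
Proof.
move=> /eqP; rewrite /dvw -leqn0 leqNgt -has_count => /hasPn H hp wp.
by have := H p; rewrite mem_iota /= hp wp => /(_ isT); rewrite negbK.
Qed.

Lemma F_alpha : F 0 (nalpha S) = a.
Proof.
rewrite /nalpha F_vert; apply: vert_id => [|p]; first by rewrite ktgtS addn0.
have E0 := ktrip0v (k := @ord0 (size (nlist S)).-1) erefl; simpl in E0.
rewrite /= vpred_ins_bot E0.
case: (boolP (vcoord a p)) => h; last by rewrite andbF.
rewrite andbT /ndim ktgtS addn0; exact: vcoord_lt.
Qed.

Lemma F_omega : F 0 (nomega S) = b.
Proof.
have hL := Lc_le.
have hij : vbead a <= vbead b by case: Hab2 => [/ltnW|[-> _]].
have hab' : forall p, vbead a = vbead b -> vcoord a p -> vcoord b p.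
  by move=> p; case: Hab2 => [h E|[_ h] _]; [rewrite E ltnn in h | apply: h].
rewrite /nomega F_vert.
have ekl : nat_of_ord (@ord_max (size (nlist S)).-1) = (Lc a b).-1.
  by move: nkS => /succn_inj.
move: (@ord_max (size (nlist S)).-1) ekl => kl ekl.
case: (posnP (Lc a b)) => [L0|Lp].
  have ei : vbead a = vbead b by move: L0; rewrite /Lc; lia.
  have kl0 : Lc a b <= kl by rewrite L0.
  have d0 : tdim T (trip_at a b 0) = 0.
    by move: L0; rewrite /Lc ei subnn add0n lt0n; case: eqP.
  apply: vert_id => [|p]; first by rewrite ktgtS ekl L0 addn0.
  rewrite /= vpred_ins_top ?hsE // ktrip_ge //= orbb.
  case: (boolP (vcoord b p)) => hb.
    have hp : p < ndimn T (vbead b) := vcoord_lt hb.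
    rewrite /ndim ktgtS ekl L0 addn0 ei hp /=.
    move: d0; rewrite /tdim /trip_at addn0 eqxx ei eqxx /= => d0.
    by apply: (dvw0 d0).
  case: (boolP (vcoord a p)) => ha; last by rewrite andbF.
  by rewrite (hab' p ei ha) in hb.
have kllt : kl < Lc a b by rewrite ekl; lia.
case: (boolP (0 < tdim T (trip_at a b (vbead b - vbead a)))) => hpos.
  have eL : Lc a b = vbead b - vbead a + 1 by rewrite /Lc hpos.
  have ekl' : nat_of_ord kl = vbead b - vbead a by rewrite ekl eL addn1.
  apply: vert_id => [|p]; first by rewrite ktgtS ekl'; lia.
  rewrite /= vpred_ins_top ?hsE // ktripE // /trip_at ekl' subnKC // eqxx /=.
  case: (boolP (vcoord b p)) => hb.
    have hp : p < ndimn T (vbead b) := vcoord_lt hb.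
    by rewrite orbT andbT /ndim ktgtS ekl' subnKC.
  rewrite orbF; case: ifP => [|_]; last by rewrite andbF.
  rewrite subn_eq0 => hba.
  have ei : vbead a = vbead b by apply/eqP; rewrite eqn_leq hij.
  case: (boolP (vcoord a p)) => ha; last by rewrite andbF.
  by rewrite (hab' p ei ha) in hb.
have eL : Lc a b = vbead b - vbead a by rewrite /Lc (negbTE hpos) addn0.
have hlt : vbead a < vbead b by move: Lp; rewrite eL subn_gt0.
have ekl' : nat_of_ord kl = vbead b - vbead a - 1 by rewrite ekl eL subn1.
have etg : nat_of_ord (ktgt kl) = (vbead b).-1 by rewrite ktgtS ekl'; lia.
have Htop : hsf kl (ctop _) = ctop _.
  apply: top_vpred => p hp; rewrite /= vpred_ins_top ?hsE // hp ktripE // /trip_at.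
  have -> : (vbead a + kl == vbead b) = false by apply/negbTE; lia.
  by rewrite /= orbT.
rewrite Htop.
have d0 : dvw (ndimn T (vbead b)) (fun _ => false) (vcoord b) = 0.
  move: hpos; rewrite -eqn0Ngt /tdim /trip_at subnKC ?(ltnW hlt) // eqxx.
  have -> : (vbead b - vbead a == 0) = false by apply/negbTE; lia.
  by move=> /= /eqP.
apply: cell_ext => [|x p]; last rewrite (cube0_eq x cpt); rewrite ?nvert_nb ?nvert_nf ?eqxx ?andbT.
  have -> : (ktgt kl).+1 < nk T by rewrite etg prednK ?vbead_lt //; lia.
  by rewrite etg prednK //; lia.
have -> : (ktgt kl).+1 < nk T by rewrite etg prednK ?vbead_lt //; lia.
rewrite /=; change (false = vcoord b p); case: (boolP (vcoord b p)) => // hb.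
have hp := vcoord_lt hb.
by have := dvw0 d0 hp hb.
Qed.

Lemma hsf_inj (k : 'I_(nk S)) (x y : cube (ndim k)) : hsf k x = hsf k y -> x = y.
Proof.
have [_ [p [_ [Hpi _]]]] := ins_main (hsE k).
by move=> E; rewrite -(Hpi x) -(Hpi y); congr p.
Qed.

Lemma F_nb_ge (k : 'I_(nk S)) (u : cube (ndim k)) :
  vbead a + k <= nb (F 0 (@nvert S k u)).
Proof. by rewrite F_vert -ktgtS nvert_nb_ge. Qed.

Lemma F_nb_nl (k : 'I_(nk S)) (u : cube (ndim k)) :
  ncanon (bconst 0 u) -> k.+1 < nk S -> nb (F 0 (@nvert S k u)) = vbead a + k.
Proof.
move=> H hk; rewrite F_vert nvert_nb -ktgtS.
case: ifP => // /andP [_ /eqP E].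
have Eu : u = ctop _ by apply: hsf_inj; rewrite E hsf_top.
by move: H; rewrite ncanon_const0 hk Eu eqxx.
Qed.

Lemma F_inj0 (c1 c2 : ncell S 0) : F 0 c1 = F 0 c2 -> c1 = c2.
Proof.
rewrite (cell0_vert c1) (cell0_vert c2).
case: c1 c2 => [[k1 h1] H1] [[k2 h2] H2] /= E.
have C1 : ncanon (bconst 0 (h1 cpt)).
  suff -> : bconst 0 (h1 cpt) = h1 by [].
  by apply: boxmap_eq => x; rewrite /= (cube0_eq x cpt).
have C2 : ncanon (bconst 0 (h2 cpt)).
  suff -> : bconst 0 (h2 cpt) = h2 by [].
  by apply: boxmap_eq => x; rewrite /= (cube0_eq x cpt).
have ek : nat_of_ord k1 = k2.
  have B1 := F_nb_ge (h1 cpt); have B2 := F_nb_ge (h2 cpt).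
  case: (ltngtP k1 k2) => // h.
    have hk : k1.+1 < nk S by apply: leq_ltn_trans (ltn_ord k2).
    have := F_nb_nl C1 hk; rewrite E => e1; lia.
  have hk : k2.+1 < nk S by apply: leq_ltn_trans (ltn_ord k1).
  have := F_nb_nl C2 hk; rewrite -E => e1; lia.
have ek' : k1 = k2 by apply: val_inj.
subst k2.
rewrite !F_vert in E.
by move/nvert_inj/hsf_inj: E => ->.
Qed.

Lemma F_inj m (c1 c2 : ncell S m) : F m c1 = F m c2 -> c1 = c2.
Proof.
move=> E; apply: cell_vert_ext => x; apply: F_inj0.
by rewrite !F_natural E.
Qed.

Lemma G_between U (G : nfun U T) : natural G -> G 0 (nalpha U) = a -> G 0 (nomega U) = b ->
  forall y, cle a (G 0 y) /\ cle (G 0 y) b.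
Proof.
move=> HG Ha Hb y; rewrite (cell0_vert y); split.
  exact: G_lower.
exact: G_upper.
Qed.

Lemma F_image U (G : nfun U T) : natural G -> G 0 (nalpha U) = a -> G 0 (nomega U) = b ->
  forall m (c : ncell U m), exists c' : ncell S m, F m c' = G m c.
Proof.
move=> HG Ha Hb m c.
have Hv : forall x, cle a (@nvert T (projT1 (sval (G m c))) (projT2 (sval (G m c)) x))
                 /\ cle (@nvert T (projT1 (sval (G m c))) (projT2 (sval (G m c)) x)) b.
  by move=> x; rewrite -nact_vert -HG; apply: G_between.
case E: (G m c) Hv => [[t f] H] /= Hv.
have fm : forall x y, subc x y -> subc (f x) (f y) := boxhom_mono (bfunP f).
have flag_bot : ~~ ((t.+1 < nk T) && (f (cbot m) == ctop _)).
  apply/negP => /andP [ht /eqP Ef].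
  suff : ~~ ncanon f by rewrite H.
  rewrite noncanonE ht; apply/forallP => x; apply/eqP; apply: top_vpred => p hp.
  by apply: (fm _ _ (subc_bot x)); rewrite Ef vpred_ctop.
have [lo1 _] := Hv (cbot m).
have [_ up1] := Hv (ctop m).
move: lo1 up1; rewrite /cle !nvert_nb (negbTE flag_bot) /nb -/(vbead a) -/(vbead b) => lo1 up1.
have hi : vbead a <= t by case: lo1 => [/ltnW|[-> _]].
have Hlo : vbead a = t -> forall x p, vcoord a p -> vpred (f x) p.
  move=> eat x p hp; case: lo1 => [h|[_ h]]; first by rewrite eat ltnn in h.
  have := h p hp; rewrite nvert_nf (negbTE flag_bot) /= => hb.
  exact: (fm _ _ (subc_bot x)).
set ft := ((t.+1 < nk T) && (f (ctop m) == ctop _)) in up1.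
have hj : t <= vbead b.
  by case: up1 => [h|[h _]]; move: h; case: (ft) => // h; lia.
have Hhi : (t : nat) = vbead b -> forall x p, vpred (f x) p -> vcoord b p.
  move=> etb x p hp; case: up1 => [h|[h1 h2]].
    by move: h; rewrite etb; case: (ft) => h; exfalso; lia.
  move: h1 h2; rewrite etb; case Eft: ft => h1 h2; first by exfalso; lia.
  have := h2 p; rewrite nvert_nf -/ft Eft /=; apply.
  exact: (fm x (ctop m) (@subc_top' m x) p hp).
have hL := Lc_le.
case: (ltnP (t - vbead a) (Lc a b)) => hk.
  have hkS : t - vbead a < nk S by rewrite nkS; lia.
  pose ko := Ordinal hkS.
  have Et : ktgt ko = t by apply: val_inj; rewrite /= ktgtS /=; lia.
  have Ek : ktrip a b ko = trip_at a b (t - vbead a) := ktripE hk.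
  have He := hsE ko; rewrite Et in He.
  have [_ [p [Hp [_ Hip]]]] := ins_main He.
  exists (nnorm (BoxMap (bh_comp Hp (bfunP f)) : boxmap m (ndim ko))).
  rewrite FN -(nnorm_canon H).
  apply: nnorm_ext => [|x q]; first by rewrite Et.
  have Hin : forall r : 'I_(ndim t), ((ktrip a b ko).1.2 r -> f x r) /\ (f x r -> (ktrip a b ko).2 r).
    move=> r; rewrite Ek /trip_at /=; split.
      case: eqP => [e0|_ //] ha; rewrite -vpredE; apply: Hlo => //; lia.
    case: eqP => [e0|_ //] hf; apply: (Hhi _ x); [lia | by rewrite vpredE].
  transitivity (vpred (ins (ndim t) (ktrip a b ko).1.2 (ktrip a b ko).2 (p (f x))) q); last by rewrite Hip.
  by rewrite /= !vpred_ins Et.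
have hab : vbead a <= vbead b := leq_trans hi hj.
have hpos : (0 < tdim T (trip_at a b (vbead b - vbead a))) = false.
  case Ep: (0 < tdim T _) => //; exfalso; move: hk; rewrite /Lc Ep; lia.
have etj : (t : nat) = vbead b by move: hk; rewrite /Lc hpos addn0; lia.
have d0 : dvw (ndimn T (vbead b)) (if vbead b - vbead a == 0 then vcoord a else (fun _ => false))
              (vcoord b) = 0.
  move: hpos; rewrite /tdim /trip_at subnKC // eqxx /=.
  by move/negbT; rewrite -eqn0Ngt => /eqP.
exists (nact (bconst m cpt) (nomega S)).
rewrite F_natural F_omega.
symmetry; apply: cell_vert_ext => x.
rewrite nact_comp.
have -> : bcomp (bconst m cpt) (bconst 0 x) = bconst 0 cpt by apply: boxmap_eq.
rewrite nact_vert0 nact_vert /=.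
apply: vert_id => // p.
apply/idP/idP => [hp|hb]; first exact: (Hhi etj x p hp).
have hp := vcoord_lt hb.
have := dvw0 d0 hp hb; case: eqP => [e0|_ //] ha.
apply: (Hlo _ x p ha); lia.
Qed.

Lemma F_terminal : terminal_in_Nec_over a b F.
Proof.
split; first by split; [exact: F_natural | split; [exact: F_alpha | exact: F_omega]].
move=> U G [HG [Ha Hb]].
have Hi := F_image HG Ha Hb.
pose H : nfun U S := fun m c => proj1_sig (constructive_indefinite_description _ (Hi m c)).
have HH : forall m c, F m (H m c) = G m c.
  by move=> m c; exact: (proj2_sig (constructive_indefinite_description _ (Hi m c))).
exists H; split.
- split; [|split].
  + by move=> m n g c; apply: F_inj; rewrite F_natural !HH; exact: HG.
  + by apply: F_inj; rewrite HH F_alpha Ha.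
  + by apply: F_inj; rewrite HH F_omega Hb.
- move=> m c; exact: HH.
- by move=> H' _ E' m c; apply: F_inj; rewrite HH; exact: E'.
Qed.

End Main.

Theorem proposition2p8 (T : necklace) (a b : ncell T 0) :
  nprec a b ->
  exists hs : forall k : 'I_(nk (subnk a b)), boxmap (ndim k) (ndim (ktgt k)),
    is_sub_iota hs /\ terminal_in_Nec_over a b (sub_iota hs).
Proof.
move=> Hp; exists (@hsf T a b); split; first exact: hsf_sub.
exact: F_terminal (nprec_cle Hp).
Qed.
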